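(* Let $\delta,\alpha\geq0$, $\sigma\in\mathbb{R}$, $\varepsilon\in(0,1)$, and assume $\delta\leq\theta\leq\alpha$. Let $\widehat{v}(t,\xi)$ solve $(1+|\xi|^{2\delta})\widehat{v}_{tt}+|\xi|^{2\theta}\widehat{v}_t+|\xi|^{2\alpha}\widehat{v}=0$, and define for $|\xi|\geq\varepsilon$ $$\rho(\xi)=\begin{cases}\dfrac{\varepsilon^{2\alpha+2\delta-4\theta}|\xi|^{2\theta}}{2(1+|\xi|^{2\delta})}&\text{if }\alpha+\delta\geq2\theta,\\[2mm] \dfrac{\varepsilon^{-2\alpha+4\theta}|\xi|^{2\alpha-2\theta}}{4}&\text{if }\alpha+\delta<2\theta,\end{cases}$$ $E_1(t,\xi)=\frac12|\xi|^{2\delta+\sigma}|\widehat{v}_t|^2+\frac12|\xi|^{2\alpha+\sigma}|\widehat{v}|^2$ and $F(t,\xi)=|\xi|^{2\theta+\sigma}|\widehat{v}_t|^2+\rho(\xi)|\xi|^{2\alpha+\sigma}|\widehat{v}|^2$. Then $E_1(t,\xi)\lesssim F(t,\xi)$ for all $t\geq0$ and $|\xi|\geq\varepsilon$.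
   Context: $\lesssim$ means $\leq C\cdot$ with $C>0$ independent of $t$ and $\xi$. *)

(* Defs.v *)
From HB Require Import structures.
From mathcomp Require Import all_boot all_order all_algebra.
From mathcomp Require Import all_classical all_reals all_analysis.
Set Implicit Arguments. Unset Strict Implicit. Unset Printing Implicit Defensive.
Import Order.TTheory GRing.Theory Num.Theory.
Import numFieldNormedType.Exports.
Local Open Scope ring_scope.

Definition enorm (R : realType) (n : nat) (xi : 'I_n -> R) : R :=
  Num.sqrt (\sum_(i < n) xi i ^+ 2).

Definition rho (R : realType) (eps alpha delta theta r : R) : R :=
  if 2 * theta <= alpha + delta then
    eps `^ (2 * alpha + 2 * delta - 4 * theta) * r `^ (2 * theta)
      / (2 * (1 + r `^ (2 * delta)))
  else
    eps `^ (- 2 * alpha + 4 * theta) * r `^ (2 * alpha - 2 * theta) / 4.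

(* E_1 and F, for a complex value vhat = vr + i vi with t-derivative
   vt = vtr + i vti; |.|^2 is the squared complex modulus. *)
Definition E1 (R : realType) (alpha delta sigma r vr vi vtr vti : R) : R :=
  2^-1 * r `^ (2 * delta + sigma) * (vtr ^+ 2 + vti ^+ 2)
  + 2^-1 * r `^ (2 * alpha + sigma) * (vr ^+ 2 + vi ^+ 2).

Definition Fen (R : realType) (eps alpha delta theta sigma r vr vi vtr vti : R) : R :=
  r `^ (2 * theta + sigma) * (vtr ^+ 2 + vti ^+ 2)
  + rho eps alpha delta theta r * r `^ (2 * alpha + sigma) * (vr ^+ 2 + vi ^+ 2).

(* vhat(., xi) = vr + i vi solves
   (1+|xi|^{2 delta}) v_tt + |xi|^{2 theta} v_t + |xi|^{2 alpha} v = 0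
   for t >= 0 (v twice differentiable in t; real coefficients, so the
   complex ODE is equivalent to the ODE for real and imaginary parts). *)
Definition solves_ode (R : realType) (alpha delta theta r : R) (u : R -> R) : Prop :=
  (forall t, derivable u t 1) /\ (forall t, derivable (derive1 u) t 1) /\
  forall t, 0 <= t ->
    (1 + r `^ (2 * delta)) * derive1n 2 u t + r `^ (2 * theta) * derive1 u t
      + r `^ (2 * alpha) * u t = 0.

(* Main.v *)
Require Import Defs.
From HB Require Import structures.
From mathcomp Require Import all_boot all_order all_algebra.
From mathcomp Require Import all_classical all_reals all_analysis.
From mathcomp Require Import ring lra.
Import Order.TTheory GRing.Theory Num.Theory.
Import numFieldNormedType.Exports.
Local Open Scope ring_scope.

Lemma pow_neg_le (R : realType) (eps r p : R) : 0 < eps -> eps <= r -> p <= 0 ->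
  r `^ p <= eps `^ p.
Proof.
move=> e0 er p0.
have r0 : 0 < r by apply: lt_le_trans er.
have -> : p = - (- p) by rewrite opprK.
rewrite (powRN r) (powRN eps).
have q0 : 0 <= - p by rewrite oppr_ge0.
have h := ge0_ler_powR q0 (ltW e0) (ltW r0) er.
by rewrite lef_pV2 ?posrE ?powR_gt0.
Qed.

Lemma pow_pos_le (R : realType) (eps r p : R) : 0 < eps -> eps <= r -> 0 <= p ->
  eps `^ p <= r `^ p.
Proof.
move=> e0 er p0.
have r0 : 0 < r by apply: lt_le_trans er.
exact: (ge0_ler_powR p0 (ltW e0) (ltW r0) er).
Qed.

Definition mlow {R : realType} (eps alpha delta theta : R) : R :=
  if 2 * theta <= alpha + delta then
    eps `^ (2 * alpha + 2 * delta - 4 * theta) * eps `^ (2 * theta) / 4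
  else eps `^ (- 2 * alpha + 4 * theta) * eps `^ (2 * alpha - 2 * theta) / 4.

Lemma mlow_gt0 (R : realType) (eps alpha delta theta : R) : 0 < eps ->
  0 < mlow eps alpha delta theta.
Proof.
move=> e0; rewrite /mlow; case: ifP => _;
  by rewrite !mulr_gt0 ?powR_gt0 ?invr_gt0.
Qed.

Lemma rho_ge (R : realType) (eps alpha delta theta r : R) :
  0 <= delta -> 0 < eps -> eps < 1 -> delta <= theta -> theta <= alpha ->
  eps <= r -> mlow eps alpha delta theta <= rho eps alpha delta theta r.
Proof.
move=> d0 e0 e1 dt ta er.
have r0 : 0 < r by apply: lt_le_trans er.
rewrite /mlow /rho; case: ifP => _.
- rewrite -!mulrA ler_wpM2l ?powR_ge0 //.
  have hd : 0 < 1 + r `^ (2 * delta) by rewrite ltr_wpDr ?powR_ge0.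
  rewrite ler_pdivlMr ?mulr_gt0 //.
  have t0 : 0 <= 2 * theta by rewrite mulr_ge0 // (le_trans d0).
  case: (leP 1 r) => r1.
  + have h1 : 1 <= r `^ (2 * theta).
      by have := ge0_ler_powR t0 ler01 (ltW r0) r1; rewrite powR1.
    have h2 : r `^ (2 * delta) <= r `^ (2 * theta).
      by apply: ler_powR => //; rewrite ler_pM2l.
    have h3 : eps `^ (2 * theta) <= 1.
      by have := ge0_ler_powR t0 (ltW e0) ler01 (ltW e1); rewrite powR1.
    have h4 : 0 <= eps `^ (2 * theta) by rewrite powR_ge0.
    have h5 : 0 <= r `^ (2 * delta) by rewrite powR_ge0.
    nra.
  + have h1 : eps `^ (2 * theta) <= r `^ (2 * theta) by apply: pow_pos_le.
    have h2 : r `^ (2 * delta) <= 1.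
      have d2 : 0 <= 2 * delta by rewrite mulr_ge0.
      by have := ge0_ler_powR d2 (ltW r0) ler01 (ltW r1); rewrite powR1.
    have h4 : 0 <= eps `^ (2 * theta) by rewrite powR_ge0.
    have h5 : 0 <= r `^ (2 * delta) by rewrite powR_ge0.
    nra.
- rewrite -!mulrA ler_wpM2l ?powR_ge0 // ler_wpM2r ?invr_ge0 //.
  apply: pow_pos_le => //. rewrite subr_ge0 ler_pM2l //.
Qed.

Theorem lemma3p3 (R : realType) (n : nat) (delta alpha theta sigma eps : R)
  (vr vi : R -> ('I_n -> R) -> R) :
  0 <= delta -> 0 <= alpha -> 0 < eps -> eps < 1 ->
  delta <= theta -> theta <= alpha ->
  (forall xi : 'I_n -> R,
     solves_ode alpha delta theta (enorm xi) (fun t => vr t xi) /\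
     solves_ode alpha delta theta (enorm xi) (fun t => vi t xi)) ->
  exists C : R, 0 < C /\
    forall (t : R) (xi : 'I_n -> R), 0 <= t -> eps <= enorm xi ->
      E1 alpha delta sigma (enorm xi) (vr t xi) (vi t xi)
         (derive1 (fun s => vr s xi) t) (derive1 (fun s => vi s xi) t)
      <= C * Fen eps alpha delta theta sigma (enorm xi) (vr t xi) (vi t xi)
         (derive1 (fun s => vr s xi) t) (derive1 (fun s => vi s xi) t).
Proof.
move=> d0 a0 e0 e1 dt ta _.
have m0 := @mlow_gt0 R eps alpha delta theta e0.
set m := mlow eps alpha delta theta in m0 *.
set k := eps `^ (2 * delta - 2 * theta).
have k0 : 0 < k by rewrite powR_gt0.
exists (k + (2 * m)^-1); split.
  by rewrite addr_gt0 // invr_gt0 mulr_gt0.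
move=> t xi _ er.
have hr := @rho_ge R eps alpha delta theta _ d0 e0 e1 dt ta er.
rewrite /E1 /Fen.
set r := enorm xi in er hr *.
have r0 : 0 < r by apply: lt_le_trans er.
move: (derive1 (fun s => vr s xi) t) (derive1 (fun s => vi s xi) t) (vr t xi) (vi t xi) => c d a b.
set X := (c ^+ 2 + d ^+ 2).
set Y := (a ^+ 2 + b ^+ 2).
have X0 : 0 <= X by rewrite addr_ge0 ?sqr_ge0.
have Y0 : 0 <= Y by rewrite addr_ge0 ?sqr_ge0.
set rh := rho eps alpha delta theta r in hr *.
rewrite -/m in hr.
have hsplit : r `^ (2 * delta + sigma) = r `^ (2 * delta - 2 * theta) * r `^ (2 * theta + sigma).
  have e : 2 * delta + sigma = (2 * delta - 2 * theta) + (2 * theta + sigma) by ring.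
  by rewrite {1}e powRD // (gt_eqF r0) implybT.
have hk : r `^ (2 * delta - 2 * theta) <= k.
  apply: (@pow_neg_le R) => //; rewrite subr_le0 ler_pM2l //.
set P := r `^ (2 * delta - 2 * theta) in hsplit hk.
set Q := r `^ (2 * theta + sigma) in hsplit *.
set S := r `^ (2 * alpha + sigma).
have P0 : 0 <= P by rewrite powR_ge0.
have Q0 : 0 <= Q by rewrite powR_ge0.
have S0 : 0 <= S by rewrite powR_ge0.
rewrite hsplit.
have c1 : 2^-1 * (P * Q) <= (k + (2 * m)^-1) * Q.
  have : 0 <= (2 * m)^-1 by rewrite invr_ge0 mulr_ge0 // ltW.
  nra.
have c2 : 2^-1 <= (k + (2 * m)^-1) * rh.
  have hm : (2 * m)^-1 * m = 2^-1 by rewrite invfM -mulrA mulVf ?gt_eqF // mulr1.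
  have : 0 <= (2 * m)^-1 by rewrite invr_ge0 mulr_ge0 // ltW.
  nra.
rewrite [in X in _ <= X]mulrDr -(mulrA 2^-1 S Y); apply: lerD.
  by rewrite mulrA; apply: ler_wpM2r.
have -> : (k + (2 * m)^-1) * (rh * S * Y) = ((k + (2 * m)^-1) * rh) * (S * Y) by ring.
by apply: ler_wpM2r => //; rewrite mulr_ge0.
Qed.
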